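(* Let $Q\in\mathbb{N}$, $\mathcal{S}\subseteq B(0,Q^{1/2})\cap(\mathbb{Z}[i]\setminus\{0\})$, $0<\Delta\le1/2$ and $\tau=\Delta^{-1/4}$. Define $K(\Delta)$ and $P(\alpha)$ as in the context. Then $$K(\Delta)\le 4\sup_{\substack{r\in\mathbb{Z}[i]\\ 1\le|r|\le\tau}}\ \sup_{\substack{b\in\mathbb{Z}[i]\\ (b,r)=1}}\ \sup_{\substack{z\in\mathbb{C}\\ \Delta^{1/2}\le|z|\le\frac{2}{|r|\tau}}} P\Big(\frac{b}{r}+z\Big).$$
   Context: $\mathbb{Z}[i]$ are the Gaussian integers, $\mathcal{N}(q)=\Re(q)^2+\Im(q)^2$, $B(y,u)=\{w\in\mathbb{C}:|w-y|\le u\}$. For each $q$ let $\mathcal{R}_q$ be a complete system of representatives of the residue classes modulo $q$ in $\mathbb{Z}[i]$ coprime to $q$. Define $$K(\Delta)=\sup_{\alpha\in\mathbb{C}}\Big|\Big\{(a,q):\ q\in\mathcal{S},\ a\in\mathcal{R}_q,\ \min_{w\in\mathbb{Z}[i]}\Big|\frac{\overline{a}}{\overline{q}}-\alpha-w\Big|\le\Delta^{1/2}\Big\}\Big|,$$ and for $\alpha\in\mathbb{C}$, $$P(\alpha)=\Big|\Big\{(a,q)\in\mathbb{Z}[i]\times\mathcal{S}:\ (a,q)=1,\ \Big|\frac{a}{q}-\alpha\Big|\le\Delta^{1/2}\Big\}\Big|.$$ *)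

(* Defs.v *)
From HB Require Import structures.
From mathcomp Require Import all_boot all_order all_algebra.
From mathcomp Require Import all_classical all_reals all_analysis.
From mathcomp Require Import complex.
Set Implicit Arguments. Unset Strict Implicit. Unset Printing Implicit Defensive.
Import Order.TTheory GRing.Theory Num.Theory.
Local Open Scope classical_set_scope.
Local Open Scope ring_scope.

Notation normc := ComplexField.Normc.normc.

Definition is_gauss {R : realType} (w : complex R) : Prop :=
  (complex.Re w \is a Num.int) /\ (complex.Im w \is a Num.int).

Definition gdvd {R : realType} (d a : complex R) : Prop :=
  exists c, is_gauss c /\ a = d * c.

Definition gcoprime {R : realType} (a q : complex R) : Prop :=
  forall d, is_gauss d -> gdvd d a -> gdvd d q -> normc d = 1.

Definition reduced_residue_system {R : realType} (q : complex R)
  (A : set (complex R)) : Prop :=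
  (forall a, A a -> is_gauss a /\ gcoprime a q) /\
  (forall x, is_gauss x -> gcoprime x q ->
     exists! a, A a /\ gdvd q (x - a)).

Definition ecard {R : realType} {T : choiceType} (A : set T) : \bar R :=
  (\esum_(x in A) 1)%E.

Definition Kcount {R : realType} (S : set (complex R))
  (Rs : complex R -> set (complex R)) (Delta : R) (alpha : complex R) : \bar R :=
  ecard [set p : complex R * complex R | S p.2 /\ Rs p.2 p.1 /\
     exists w, is_gauss w /\
       normc (conjc p.1 / conjc p.2 - alpha - w) <= Num.sqrt Delta].

Definition Kfun {R : realType} (S : set (complex R))
  (Rs : complex R -> set (complex R)) (Delta : R) : \bar R :=
  ereal_sup (range (Kcount S Rs Delta)).

Definition Pfun {R : realType} (S : set (complex R)) (Delta : R)
  (alpha : complex R) : \bar R :=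
  ecard [set p : complex R * complex R | is_gauss p.1 /\ S p.2 /\
     gcoprime p.1 p.2 /\ normc (p.1 / p.2 - alpha) <= Num.sqrt Delta].

Definition rhs_index {R : realType} (Delta : R) (r b z : complex R) : Prop :=
  let tau := Delta `^ (- (1 / 4)) in
  [/\ is_gauss r, 1 <= normc r <= tau,
      is_gauss b, gcoprime b r &
      Num.sqrt Delta <= normc z <= 2 / (normc r * tau)].

Definition RHSsup {R : realType} (S : set (complex R)) (Delta : R) : \bar R :=
  ereal_sup [set y : \bar R | exists r b z,
       rhs_index Delta r b z /\ y = Pfun S Delta (b / r + z)].

(* Main.v *)
Require Import Defs.
From HB Require Import structures.
From mathcomp Require Import all_boot all_order all_algebra.
From mathcomp Require Import all_classical all_reals all_analysis.
From mathcomp Require Import complex.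
From mathcomp Require Import ring lra zify.
Set Implicit Arguments. Unset Strict Implicit. Unset Printing Implicit Defensive.
Import Order.TTheory GRing.Theory Num.Theory.
Local Open Scope classical_set_scope.
Local Open Scope ring_scope.

Section Basics.
Variable R : realType.
Implicit Types z w x y : complex R.

Definition ns z : R := complex.Re z ^+ 2 + complex.Im z ^+ 2.

Lemma ns_ge0 z : 0 <= ns z.
Proof. by rewrite /ns addr_ge0 // sqr_ge0. Qed.

Lemma normc_ns z : normc z = Num.sqrt (ns z).
Proof. by case: z. Qed.

Lemma normc_ge0 z : 0 <= normc z.
Proof. by rewrite normc_ns sqrtr_ge0. Qed.

Lemma normc_sq z : normc z ^+ 2 = ns z.
Proof. by rewrite normc_ns sqr_sqrtr // ns_ge0. Qed.

Lemma normc_le z c : 0 <= c -> (normc z <= c) = (ns z <= c ^+ 2).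
Proof.
move=> c0; have e : c = Num.sqrt (c ^+ 2) by rewrite sqrtr_sqr ger0_norm.
by rewrite normc_ns {1}e ler_sqrt // sqr_ge0.
Qed.

Lemma normc_ge z c : 0 <= c -> (c <= normc z) = (c ^+ 2 <= ns z).
Proof.
move=> c0; have e : c = Num.sqrt (c ^+ 2) by rewrite sqrtr_sqr ger0_norm.
by rewrite normc_ns {1}e ler_sqrt // ns_ge0.
Qed.

Lemma normc_lt z c : 0 <= c -> (normc z < c) = (ns z < c ^+ 2).
Proof. by move=> c0; rewrite !ltNge normc_ge. Qed.

Lemma ReD z w : complex.Re (z + w) = complex.Re z + complex.Re w.
Proof. by case: z; case: w. Qed.
Lemma ImD z w : complex.Im (z + w) = complex.Im z + complex.Im w.
Proof. by case: z; case: w. Qed.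
Lemma ReN z : complex.Re (- z) = - complex.Re z.
Proof. by case: z. Qed.
Lemma ImN z : complex.Im (- z) = - complex.Im z.
Proof. by case: z. Qed.
Lemma ReB z w : complex.Re (z - w) = complex.Re z - complex.Re w.
Proof. by rewrite ReD ReN. Qed.
Lemma ImB z w : complex.Im (z - w) = complex.Im z - complex.Im w.
Proof. by rewrite ImD ImN. Qed.
Lemma ReM z w : complex.Re (z * w) =
  complex.Re z * complex.Re w - complex.Im z * complex.Im w.
Proof. by case: z; case: w. Qed.
Lemma ImM z w : complex.Im (z * w) =
  complex.Re z * complex.Im w + complex.Im z * complex.Re w.
Proof. by case: z; case: w. Qed.
Lemma ReJ z : complex.Re (conjc z) = complex.Re z.
Proof. by case: z. Qed.
Lemma ImJ z : complex.Im (conjc z) = - complex.Im z.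
Proof. by case: z. Qed.
Lemma Re0 : complex.Re (0 : complex R) = 0. Proof. by []. Qed.
Lemma Im0 : complex.Im (0 : complex R) = 0. Proof. by []. Qed.
Lemma Re1 : complex.Re (1 : complex R) = 1. Proof. by []. Qed.
Lemma Im1 : complex.Im (1 : complex R) = 0. Proof. by []. Qed.

Lemma complex_ext z w : complex.Re z = complex.Re w ->
  complex.Im z = complex.Im w -> z = w.
Proof. by case: z; case: w => /= ? ? ? ? -> ->. Qed.

Lemma normcJ z : normc (conjc z) = normc z.
Proof. by rewrite !normc_ns /ns ReJ ImJ sqrrN. Qed.

Lemma nsM z w : ns (z * w) = ns z * ns w.
Proof. by rewrite /ns ReM ImM; ring. Qed.

Lemma ns_eq0 z : (ns z == 0) = (z == 0).
Proof.
apply/eqP/eqP => [|->]; last by rewrite /ns /= expr0n /= addr0.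
rewrite /ns => /eqP; rewrite paddr_eq0 ?sqr_ge0 // !sqrf_eq0 => /andP[/eqP a /eqP b].
by apply: complex_ext; rewrite ?a ?b.
Qed.

Lemma gauss0 : is_gauss (0 : complex R).
Proof. by split; rewrite /= rpred0. Qed.
Lemma gauss1 : is_gauss (1 : complex R).
Proof. by split; rewrite /= ?rpred0 ?rpred1. Qed.
Lemma gaussD z w : is_gauss z -> is_gauss w -> is_gauss (z + w).
Proof. by move=> [a b] [c d]; split; rewrite ?ReD ?ImD rpredD. Qed.
Lemma gaussN z : is_gauss z -> is_gauss (- z).
Proof. by move=> [a b]; split; rewrite ?ReN ?ImN rpredN. Qed.
Lemma gaussB z w : is_gauss z -> is_gauss w -> is_gauss (z - w).
Proof. by move=> gz gw; apply: gaussD => //; apply: gaussN. Qed.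
Lemma gaussM z w : is_gauss z -> is_gauss w -> is_gauss (z * w).
Proof.
by move=> [a b] [c d]; split; rewrite ?ReM ?ImM ?rpredB ?rpredD ?rpredM.
Qed.
Lemma gaussJ z : is_gauss z -> is_gauss (conjc z).
Proof. by move=> [a b]; split; rewrite ?ReJ ?ImJ ?rpredN. Qed.

Lemma ns_int z : is_gauss z -> ns z \is a Num.int.
Proof. by move=> [a b]; rewrite /ns rpredD // rpredX. Qed.

Lemma int_ge1 (x : R) : x \is a Num.int -> 0 < x -> 1 <= x.
Proof.
move=> /intrP[m ->]; rewrite ltr0z => m0.
have : (1 <= m)%R by lia.
by rewrite -(ler_int R).
Qed.

Lemma int_ge2 (x : R) : x \is a Num.int -> 0 < x -> x != 1 -> 2 <= x.
Proof.
move=> /intrP[m ->]; rewrite ltr0z => m0 m1.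
have m1' : m != 1 by apply: contra m1 => /eqP ->.
have : (2 <= m)%R by lia.
by rewrite -(ler_int R).
Qed.

Lemma gauss_ns_ge1 z : is_gauss z -> z != 0 -> 1 <= ns z.
Proof.
move=> gz z0; apply: int_ge1; first exact: ns_int.
by rewrite lt_def ns_eq0 z0 ns_ge0.
Qed.

End Basics.

Section Div.
Variable R : realType.
Implicit Types z w x y a b d q r c : complex R.

Lemma gdvdD d a b : gdvd d a -> gdvd d b -> gdvd d (a + b).
Proof.
move=> [c1 [g1 ->]] [c2 [g2 ->]]; exists (c1 + c2); split; last by rewrite mulrDr.
exact: gaussD.
Qed.

Lemma gdvdB d a b : gdvd d a -> gdvd d b -> gdvd d (a - b).
Proof.
move=> [c1 [g1 ->]] [c2 [g2 ->]]; exists (c1 - c2); split; last by rewrite mulrBr.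
exact: gaussB.
Qed.

Lemma gdvdMr d a c : is_gauss c -> gdvd d a -> gdvd d (a * c).
Proof.
move=> gc [c1 [g1 ->]]; exists (c1 * c); split; last by rewrite mulrA.
exact: gaussM.
Qed.

Lemma gdvd_nz d a : a != 0 -> gdvd d a -> d != 0.
Proof. by move=> a0 [c [_ ea]]; apply: contra a0 => /eqP d0; rewrite ea d0 mul0r. Qed.

Lemma gcoprime_sub a q w : is_gauss w -> gcoprime a q -> gcoprime (a - w * q) q.
Proof.
move=> gw H d gd da dq; apply: H => //.
have -> : a = (a - w * q) + q * w by ring.
by apply: gdvdD => //; apply: gdvdMr.
Qed.

Lemma ns_nat z : is_gauss z -> exists N : nat, ns z = N%:R.
Proof.
move=> gz; have /intrP[m em] := ns_int gz.
case: m em => n en; first by exists n.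
by have := ns_ge0 z; rewrite en ler0z.
Qed.

Lemma reduce_frac b r : is_gauss b -> is_gauss r -> r != 0 ->
  exists b' r', [/\ is_gauss b', is_gauss r', r' != 0, gcoprime b' r' &
     (b' / r' = b / r /\ ns r' <= ns r)].
Proof.
suff H : forall N : nat, forall b r, is_gauss b -> is_gauss r -> r != 0 ->
   ns r <= N%:R -> exists b' r', [/\ is_gauss b', is_gauss r', r' != 0,
   gcoprime b' r' & (b' / r' = b / r /\ ns r' <= ns r)].
  move=> gb gr r0; have [N eN] := ns_nat gr.
  by apply: (H N) => //; rewrite eN.
elim=> [|N IH] {}b {}r gb gr r0 hN.
  by have := gauss_ns_ge1 gr r0; rewrite leNgt (le_lt_trans hN) ?ltr01.
have [cop|ncop] := pselect (gcoprime b r).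
  by exists b, r; split.
have [d /not_implyP[gd /not_implyP[db /not_implyP[dr nd1]]]] :
    exists d, ~ (is_gauss d -> gdvd d b -> gdvd d r -> normc d = 1).
  by apply/existsNP.
have d0 := gdvd_nz r0 dr.
move: db dr; rewrite /gdvd => -[c1 [g1 eb]] [c2 [g2 er]].
have c20 : c2 != 0 by apply/eqP => c2e; move/eqP: r0; apply; rewrite er c2e mulr0.
have nsd : 2 <= ns d.
  apply: int_ge2; first exact: ns_int.
    by rewrite lt_def ns_eq0 d0 ns_ge0.
  apply: contra_not_neq nd1 => /eqP e; rewrite normc_ns; apply/eqP.
  by rewrite (eqP e) sqrtr1.
have hc2 : ns c2 <= N%:R.
  have := gauss_ns_ge1 g2 c20; move: hN; rewrite er nsM -natr1.
  have := ns_ge0 c2; nra.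
have [b' [r' [gb' gr' r'0 cop [e1 e2]]]] := IH c1 c2 g1 g2 c20 hc2.
exists b', r'; split => //; split.
  by rewrite e1 eb er; field; rewrite d0 c20.
rewrite (le_trans e2) // er nsM; have := ns_ge0 c2; nra.
Qed.

End Div.

Section Pigeon.
Variable R : realType.

Definition gi (p : int * int) : complex R := Complex (p.1%:~R) (p.2%:~R).

Lemma gauss_gi p : is_gauss (gi p).
Proof. by split; apply/intrP; [exists p.1 | exists p.2]. Qed.

Definition frac (x : R) := x - (Num.floor x)%:~R.

Lemma frac_itv x : 0 <= frac x < 1.
Proof.
have /andP[h1 h2] := floor_itv x; rewrite intrD in h2.
by rewrite /frac subr_ge0 h1 /= ltrBlDl.
Qed.

Definition cell (g : complex R) (m1 m2 : nat) (p : int * int) : int * int :=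
  (Num.floor (frac (complex.Re (gi p * g)) * m1%:R),
   Num.floor (frac (complex.Im (gi p * g)) * m2%:R)).

Definition grid (m1 m2 : nat) : seq (int * int) :=
  [seq (i%:Z, j%:Z) | i <- iota 0 m1, j <- iota 0 m2].

Lemma floor_nat (y : R) (m : nat) : 0 <= y < m%:R ->
  exists2 k : nat, (k < m)%N & Num.floor y = k%:Z.
Proof.
move=> /andP[y0 ym].
have f0 : 0 <= Num.floor y by rewrite floor_ge0.
have fm : Num.floor y < m%:Z by rewrite floor_lt_int.
by case: (Num.floor y) f0 fm => k // _ km; exists k => //; move: km; rewrite ltz_nat.
Qed.

Lemma cell_in g m1 m2 p : (0 < m1)%N -> (0 < m2)%N -> cell g m1 m2 p \in grid m1 m2.
Proof.
move=> m10 m20; rewrite /cell.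
have h : forall x (m : nat), (0 < m)%N -> 0 <= frac x * m%:R < m%:R.
  move=> x m m0; have /andP[a b] := frac_itv x.
  by rewrite mulr_ge0 // ?ler0n //= -{2}[m%:R]mul1r ltr_pM2r // ltr0n.
have [k1 k1m ->] := floor_nat (h (complex.Re (gi p * g)) m1 m10).
have [k2 k2m ->] := floor_nat (h (complex.Im (gi p * g)) m2 m20).
by apply: allpairs_f; rewrite mem_iota.
Qed.

Lemma size_grid m1 m2 : size (grid m1 m2) = (m1 * m2)%N.
Proof. by rewrite size_allpairs !size_iota. Qed.

Lemma pigeon g (s : seq (int * int)) m1 m2 : uniq s -> (0 < m1)%N -> (0 < m2)%N ->
  (m1 * m2 < size s)%N ->
  exists p q, [/\ p \in s, q \in s, p != q & cell g m1 m2 p = cell g m1 m2 q].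
Proof.
move=> us m10 m20 hs.
apply: contrapT => hn.
have inj : {in s &, injective (cell g m1 m2)}.
  move=> p q ps qs e; apply: contrapT => npq; apply: hn.
  by exists p, q; split => //; apply/eqP.
have u2 : uniq (map (cell g m1 m2) s) by rewrite map_inj_in_uniq.
have sub : {subset map (cell g m1 m2) s <= grid m1 m2}.
  by move=> x /mapP[p _ ->]; apply: cell_in.
have := uniq_leq_size u2 sub; rewrite size_map size_grid.
by rewrite leqNgt hs.
Qed.

Lemma same_floor (x y : R) : Num.floor x = Num.floor y -> (x - y) ^+ 2 < 1.
Proof.
move=> e; have /andP[a b] := floor_itv x; have /andP[c d] := floor_itv y.
move: a b c d; rewrite e intrD; set k := (Num.floor y)%:~R; move=> a b c d.
nra.
Qed.

Definition dist2 (p q : int * int) : int := (p.1 - q.1) ^+ 2 + (p.2 - q.2) ^+ 2.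

Lemma pigeon_approx g (s : seq (int * int)) m1 m2 (D2 : R) :
  uniq s -> (0 < m1)%N -> (0 < m2)%N -> (m1 * m2 < size s)%N ->
  (forall p q, p \in s -> q \in s -> (dist2 p q)%:~R <= D2) ->
  exists r b, [/\ is_gauss r, is_gauss b, r != 0, ns r <= D2 &
     ns (r * g - b) < (m1%:R ^+ 2)^-1 + (m2%:R ^+ 2)^-1].
Proof.
move=> us m10 m20 hs hD.
have [p [q [ps qs pq ec]]] := pigeon g us m10 m20 hs.
set wp := gi p * g; set wq := gi q * g.
exists (gi p - gi q).
exists (Complex ((Num.floor (complex.Re wp))%:~R - (Num.floor (complex.Re wq))%:~R)
                ((Num.floor (complex.Im wp))%:~R - (Num.floor (complex.Im wq))%:~R)).
split.
- by apply: gaussB; apply: gauss_gi.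
- by split; apply: rpredB; apply/intrP; eexists.
- apply/eqP => /subr0_eq e; move/negP: pq; apply; apply/eqP.
  have e1 := congr1 (@complex.Re R) e; have e2 := congr1 (@complex.Im R) e.
  move: e1 e2 => /= /intr_inj e1 /intr_inj e2.
  by case: p q e1 e2 {ps qs ec wp wq e} => [a b] [c d] /= -> ->.
- rewrite /ns ReB ImB /=.
  suff -> : (p.1%:~R - q.1%:~R) ^+ 2 + (p.2%:~R - q.2%:~R) ^+ 2 = (dist2 p q)%:~R :> R.
    exact: hD.
  by rewrite /dist2 rmorphD /= !rmorphXn /= !rmorphB.
- have ef : forall (x y : R) (m : nat), (0 < m)%N ->
     Num.floor (frac x * m%:R) = Num.floor (frac y * m%:R) ->
     (frac x - frac y) ^+ 2 < (m%:R ^+ 2)^-1.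
    move=> x y m m0 /same_floor h.
    have mp : 0 < m%:R ^+ 2 :> R by rewrite exprn_gt0 // ltr0n.
    rewrite -(ltr_pM2r mp) mulVf ?gt_eqF //.
    by rewrite -exprMn mulrBl.
  case: ec => c1 c2.
  have h1 := ef _ _ _ m10 c1; have h2 := ef _ _ _ m20 c2.
  rewrite /ns ReB ImB mulrBl ReB ImB /= -/wp -/wq.
  rewrite /frac in h1 h2.
  set A := complex.Re wp in h1 *; set B := complex.Re wq in h1 *.
  set C := complex.Im wp in h2 *; set D := complex.Im wq in h2 *.
  have -> : A - B - ((Num.floor A)%:~R - (Num.floor B)%:~R) =
     A - (Num.floor A)%:~R - (B - (Num.floor B)%:~R) by ring.
  have -> : C - D - ((Num.floor C)%:~R - (Num.floor D)%:~R) =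
     C - (Num.floor C)%:~R - (D - (Num.floor D)%:~R) by ring.
  exact: ltrD.
Qed.

End Pigeon.

Section Dir.
Variable R : realType.

Lemma grid_uniq m1 m2 : uniq (grid m1 m2).
Proof.
apply: allpairs_uniq; rewrite ?iota_uniq //.
by move=> [a b] [c d] _ _ /= [] -> ->.
Qed.

Lemma mem_grid m1 m2 p : p \in grid m1 m2 ->
  exists i j : nat, [/\ (i < m1)%N, (j < m2)%N & p = (i%:Z, j%:Z)].
Proof.
move=> /allpairsP[[i j] [/= hi hj ->]]; exists i, j.
by move: hi hj; rewrite !mem_iota !add0n => /andP[_ ->] /andP[_ ->].
Qed.

Lemma grid_dist M p q : p \in grid M.+1 M.+1 -> q \in grid M.+1 M.+1 ->
  (dist2 p q <= 2 * (M%:Z) ^+ 2)%R.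
Proof.
move=> /mem_grid[i [j [hi hj ->]]] /mem_grid[k [l [hk hl ->]]].
rewrite /dist2 /=; nia.
Qed.

Definition fam (M : nat) : seq (int * int) := (M.+1%:Z, (M./2)%:Z) :: grid M.+1 M.+1.

Lemma fam_uniq M : uniq (fam M).
Proof.
rewrite /fam cons_uniq grid_uniq andbT; apply/negP => /mem_grid[i [j [hi _ []]]].
by move=> e _; move: hi; rewrite -e ltnn.
Qed.

Lemma fam_dist M p q : p \in fam M -> q \in fam M ->
  (dist2 p q <= 2 * (M%:Z) ^+ 2)%R \/
  (dist2 p q <= (M.+1%:Z) ^+ 2 + ((M - M./2)%N%:Z) ^+ 2)%R.
Proof.
have hh := odd_double_half M.
have hM : (M./2 <= M)%N by rewrite -{2}hh -addnn; lia.
rewrite /fam => hp hq.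
move: hp; rewrite in_cons => /predU1P[->|hp]; move: hq; rewrite in_cons => /predU1P[->|hq].
- by left; rewrite /dist2 /=; nia.
- right; move: hq => /mem_grid[i [j [hi hj ->]]]; rewrite /dist2 /=.
  nia.
- right; move: hp => /mem_grid[i [j [hi hj ->]]]; rewrite /dist2 /=.
  nia.
- by left; apply: grid_dist.
Qed.


Lemma round_approx (g : complex R) : exists b, is_gauss b /\ ns (g - b) <= 1 / 2.
Proof.
exists (Complex (Num.floor (complex.Re g + 1/2))%:~R (Num.floor (complex.Im g + 1/2))%:~R).
split; first by split; apply/intrP; eexists.
rewrite /ns ReB ImB /=.
have /andP[a1 a2] := floor_itv (complex.Re g + 1/2).
have /andP[b1 b2] := floor_itv (complex.Im g + 1/2).
rewrite intrD in a2; rewrite intrD in b2.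
set x := (Num.floor _)%:~R in a1 a2 *; set y := (Num.floor _)%:~R in b1 b2 *.
nra.
Qed.

Lemma exists_M (t : R) : 0 <= t ->
  exists M : nat, 2 * M%:R ^+ 2 <= t /\ t < 2 * (M%:R + 1) ^+ 2.
Proof.
move=> t0; set x := Num.sqrt (t / 2).
have x0 : 0 <= x by apply: sqrtr_ge0.
have ex : x ^+ 2 = t / 2 by rewrite sqr_sqrtr // divr_ge0.
have /andP[a b] := floor_itv x.
have f0 : 0 <= Num.floor x by rewrite floor_ge0.
move: a b; case: (Num.floor x) f0 => // M _ a b; exists M.
rewrite intrD in b; move: a b; rewrite -!pmulrn /= => a b.
have a2 : M%:R ^+ 2 <= x ^+ 2 by rewrite ler_pXn2r // ?nnegrE // ler0n.
have b2 : x ^+ 2 < (M%:R + 1) ^+ 2.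
  by rewrite ltr_pXn2r // ?nnegrE // addr_ge0 // ler0n.
rewrite ex in a2 b2; split; lra.
Qed.

Lemma intr_le (a b : int) : (a <= b)%R -> (a%:~R : R) <= b%:~R.
Proof. by rewrite ler_int. Qed.

Lemma dirichlet (g : complex R) (t : R) : 1 <= t ->
  exists r b, [/\ is_gauss r, is_gauss b, r != 0, ns r <= t & ns (r * g - b) * t <= 4].
Proof.
move=> t1.
have [t8|t8] := lerP t 8.
  have [b [gb hb]] := round_approx g.
  exists 1, b; split.
  - exact: gauss1.
  - exact: gb.
  - exact: oner_neq0.
  - by rewrite /ns /= expr1n expr0n /= addr0.
  - by rewrite mul1r; nra.
have [t12|t12] := lerP t (64/5).
  have hD : forall p q, p \in grid 3 3 -> q \in grid 3 3 -> (dist2 p q)%:~R <= t.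
    move=> p q hp hq; apply: (le_trans (intr_le (grid_dist hp hq))).
    rewrite /= rmorphM /= rmorphXn /=; lra.
  have [r [b [gr gb r0 hr hb]]] := @pigeon_approx R g (grid 3 3) 2 4 t (grid_uniq 3 3) isT isT isT hD.
  exists r, b; split => //.
  have e : ((2%:R : R) ^+ 2)^-1 + ((4%:R : R) ^+ 2)^-1 = 5 / 16.
    by rewrite -!natrX /=; field.
  rewrite e in hb; nra.
have [t18|t18] := boolP ((18 <= t) && (t <= 576/25)).
  move/andP: t18 => [t18 t23].
  have hD : forall p q, p \in grid 4 4 -> q \in grid 4 4 -> (dist2 p q)%:~R <= t.
    move=> p q hp hq; apply: (le_trans (intr_le (grid_dist hp hq))).
    rewrite /= rmorphM /= rmorphXn /=; lra.
  have [r [b [gr gb r0 hr hb]]] := @pigeon_approx R g (grid 4 4) 3 4 t (grid_uniq 4 4) isT isT isT hD.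
  exists r, b; split => //.
  have e : ((3%:R : R) ^+ 2)^-1 + ((4%:R : R) ^+ 2)^-1 = 25 / 144.
    by rewrite -!natrX /=; field.
  rewrite e in hb; nra.
have [M [hM1 hM2]] := exists_M (le_trans ler01 t1).
have M2 : (2 <= M)%N.
  rewrite leqNgt; apply/negP => hM.
  have : M%:R <= 1 :> R by change (M%:R <= 1%:R :> R); rewrite ler_nat -ltnS.
  have := ler0n R M; nra.
have hext : ((M.+1%:Z) ^+ 2 + ((M - M./2)%N%:Z) ^+ 2)%:~R <= t.
  have [M4|M4] := leqP 4 M.
    apply: le_trans hM1.
    have hi : ((M.+1%:Z) ^+ 2 + ((M - M./2)%N%:Z) ^+ 2 <= 2 * (M%:Z) ^+ 2)%R.
      by have := odd_double_half M; nia.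
    apply: le_trans (intr_le hi) _.
    by rewrite rmorphM /= rmorphXn.
  have : M = 2%N \/ M = 3%N by lia.
  case=> eM; rewrite eM in hM1 *.
    rewrite (_ : (_ + _)%R = 10%:Z) //; rewrite /= in hM1; lra.
  rewrite (_ : (_ + _)%R = 20%:Z) //; rewrite /= in hM1.
  move: t18; rewrite negb_and -!ltNge => /orP[]; lra.
have hs : (M.+1 * M.+1 < size (fam M))%N by change (M.+1 * M.+1 < (size (grid M.+1 M.+1)).+1)%N; rewrite size_grid ltnSn.
have hD : forall p q, p \in fam M -> q \in fam M -> (dist2 p q)%:~R <= t.
  move=> p q hp hq; case: (fam_dist hp hq) => h.
    apply: (le_trans (intr_le h)).
    by rewrite /= rmorphM /= rmorphXn /=.
  exact: (le_trans (intr_le h)).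
have [r [b [gr gb r0 hr hb]]] := @pigeon_approx R g (fam M) M.+1 M.+1 t (fam_uniq M) isT isT hs hD.
exists r, b; split => //.
have Mp : 0 < (M.+1%:R : R) ^+ 2 by rewrite exprn_gt0 // ltr0n.
move: hb hM2; rewrite -natr1; set u := (M%:R + 1) ^+ 2 => hb hM2.
have hu : 0 < u by rewrite /u exprn_gt0 // addr_ge0 // ?ler0n // ltr01.
have : ns (r * g - b) * u < 2.
  rewrite -(ltr_pM2r hu) in hb.
  have e : (u^-1 + u^-1) * u = 2 by field; rewrite gt_eqF.
  by rewrite e in hb.
have := ns_ge0 (r * g - b); nra.
Qed.

End Dir.

Section Cover.
Variable R : realType.

Lemma cover_core (a b l r : R) : 0 <= a -> 0 <= b -> 0 <= l -> l < r ->
  a ^+ 2 + b ^+ 2 - 2 * l * a + l ^+ 2 <= r ^+ 2 ->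
  a ^+ 2 + b ^+ 2 <= 2 * r * a \/ a ^+ 2 + b ^+ 2 <= 2 * r * b.
Proof.
move=> a0 b0 l0 lr h.
have [ab|ba] := lerP b a.
  left; rewrite leNgt; apply/negP => hN.
  have ar : r < a by nra.
  have : (r - l) * (r + l - 2 * a) < 0.
    by rewrite pmulr_rlt0; lra.
  nra.
right; rewrite leNgt; apply/negP => hN.
have br : r < b by nra.
have : (r - l) * (r + l - 2 * b) < 0.
  by rewrite pmulr_rlt0; lra.
nra.
Qed.

Lemma cover_real (A B l r : R) : 0 <= l -> l < r ->
  A ^+ 2 + B ^+ 2 - 2 * l * A + l ^+ 2 <= r ^+ 2 ->
  [\/ A ^+ 2 + B ^+ 2 <= 2 * r * A, A ^+ 2 + B ^+ 2 <= 2 * r * B,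
      A ^+ 2 + B ^+ 2 <= - (2 * r * A) | A ^+ 2 + B ^+ 2 <= - (2 * r * B)].
Proof.
move=> l0 lr h.
have h' : `|A| ^+ 2 + `|B| ^+ 2 - 2 * l * `|A| + l ^+ 2 <= r ^+ 2.
  rewrite !real_normK ?num_real //; apply: le_trans h.
  have : A <= `|A| by apply: ler_norm.
  nra.
have r0 : 0 <= r by lra.
have [hA|hB] := cover_core (normr_ge0 A) (normr_ge0 B) l0 lr h'.
  rewrite !real_normK ?num_real // in hA.
  have [A0|A0] := lerP 0 A.
    by apply: Or41; rewrite (ger0_norm A0) in hA.
  by apply: Or43; rewrite (ltr0_norm A0) mulrN in hA.
rewrite !real_normK ?num_real // in hB.
have [B0|B0] := lerP 0 B.
  by apply: Or42; rewrite (ger0_norm B0) in hB.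
by apply: Or44; rewrite (ltr0_norm B0) mulrN in hB.
Qed.


Lemma lagrange2 (a b c e : R) : (a ^+ 2 + b ^+ 2) * (c ^+ 2 + e ^+ 2) =
     (a * c + b * e) ^+ 2 + (b * c - a * e) ^+ 2.
Proof. ring. Qed.

Lemma unit_dir (d : complex R) : exists u1 u2 : R,
  u1 ^+ 2 + u2 ^+ 2 = 1 /\ complex.Re d = normc d * u1 /\ complex.Im d = normc d * u2.
Proof.
have [d0|d0] := eqVneq d 0.
  have n00 : normc (0 : complex R) = 0.
    by rewrite normc_ns /ns /= expr0n /= addr0 sqrtr0.
  exists 1, 0; rewrite d0 n00 /= !mul0r; split => //.
  by rewrite expr1n expr0n /= addr0.
have n0 : normc d != 0.
  apply: contra d0 => /eqP h; rewrite -ns_eq0 -normc_sq h.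
  by rewrite expr0n.
exists (complex.Re d / normc d), (complex.Im d / normc d); split; last by split; field.
have e : normc d ^+ 2 = ns d by apply: normc_sq.
rewrite /ns in e; rewrite !expr_div_n -mulrDl -e; field.
by rewrite n0.
Qed.

Lemma cover (c0 d : complex R) (r : R) : 0 < r -> normc d < r ->
  exists z0 z1 z2 z3 : complex R,
   [/\ normc z0 = r, normc z1 = r, normc z2 = r, normc z3 = r &
    forall p, normc (p - (c0 + d)) <= r ->
      [\/ normc (p - (c0 + z0)) <= r, normc (p - (c0 + z1)) <= r,
          normc (p - (c0 + z2)) <= r | normc (p - (c0 + z3)) <= r]].
Proof.
move=> r0 dr.
have [u1 [u2 [hu [e1 e2]]]] := unit_dir d.
have nz : forall z : complex R, ns z = r ^+ 2 -> normc z = r.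
  by move=> z hz; rewrite normc_ns hz sqrtr_sqr gtr0_norm.
exists (Complex (r * u1) (r * u2)), (Complex (- (r * u2)) (r * u1)),
       (Complex (- (r * u1)) (- (r * u2))), (Complex (r * u2) (- (r * u1))).
split; try (apply: nz; rewrite /ns /=;
  transitivity (r ^+ 2 * (u1 ^+ 2 + u2 ^+ 2)); [ring | by rewrite hu mulr1]).
move=> p; have r0' : 0 <= r := ltW r0.
rewrite !normc_le // /ns !ReB !ImB !ReD !ImD /= e1 e2.
set q1 := complex.Re p - complex.Re c0; set q2 := complex.Im p - complex.Im c0.
have -> : complex.Re p - (complex.Re c0 + normc d * u1) = q1 - normc d * u1 by rewrite /q1; ring.
have -> : complex.Im p - (complex.Im c0 + normc d * u2) = q2 - normc d * u2 by rewrite /q2; ring.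
set A := q1 * u1 + q2 * u2; set B := q2 * u1 - q1 * u2.
have eN : q1 ^+ 2 + q2 ^+ 2 = A ^+ 2 + B ^+ 2.
  rewrite -[_ + q2 ^+ 2]mulr1 -hu /A /B.
  exact: lagrange2.
have ex : forall l : R, (q1 - l * u1) ^+ 2 + (q2 - l * u2) ^+ 2 =
    A ^+ 2 + B ^+ 2 - 2 * l * A + l ^+ 2.
  move=> l; transitivity (q1 ^+ 2 + q2 ^+ 2 - 2 * l * A + l ^+ 2 * (u1 ^+ 2 + u2 ^+ 2)).
    by rewrite /A; ring.
  by rewrite hu mulr1 eN.
rewrite ex => h.
have := cover_real (normc_ge0 d) dr h.
have E0 : complex.Re p - (complex.Re c0 + r * u1) = q1 - r * u1 by rewrite /q1; ring.
have E1 : complex.Im p - (complex.Im c0 + r * u2) = q2 - r * u2 by rewrite /q2; ring.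
have E2 : complex.Re p - (complex.Re c0 - r * u2) = q1 + r * u2 by rewrite /q1; ring.
have E3 : complex.Im p - (complex.Im c0 + r * u1) = q2 - r * u1 by rewrite /q2; ring.
have E4 : complex.Re p - (complex.Re c0 - r * u1) = q1 + r * u1 by rewrite /q1; ring.
have E5 : complex.Im p - (complex.Im c0 - r * u2) = q2 + r * u2 by rewrite /q2; ring.
have E6 : complex.Re p - (complex.Re c0 + r * u2) = q1 - r * u2 by rewrite /q1; ring.
have E7 : complex.Im p - (complex.Im c0 - r * u1) = q2 + r * u1 by rewrite /q2; ring.
rewrite E0 E1 E2 E3 E4 E5 E6 E7.
have F0 : (q1 - r * u1) ^+ 2 + (q2 - r * u2) ^+ 2 = A ^+ 2 + B ^+ 2 - 2 * r * A + r ^+ 2.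
  exact: ex.
have F1 : (q1 + r * u2) ^+ 2 + (q2 - r * u1) ^+ 2 = A ^+ 2 + B ^+ 2 - 2 * r * B + r ^+ 2.
  transitivity (q1 ^+ 2 + q2 ^+ 2 - 2 * r * B + r ^+ 2 * (u1 ^+ 2 + u2 ^+ 2)).
    by rewrite /B; ring.
  by rewrite hu mulr1 eN.
have F2 : (q1 + r * u1) ^+ 2 + (q2 + r * u2) ^+ 2 = A ^+ 2 + B ^+ 2 + 2 * r * A + r ^+ 2.
  transitivity (q1 ^+ 2 + q2 ^+ 2 + 2 * r * A + r ^+ 2 * (u1 ^+ 2 + u2 ^+ 2)).
    by rewrite /A; ring.
  by rewrite hu mulr1 eN.
have F3 : (q1 - r * u2) ^+ 2 + (q2 + r * u1) ^+ 2 = A ^+ 2 + B ^+ 2 + 2 * r * B + r ^+ 2.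
  transitivity (q1 ^+ 2 + q2 ^+ 2 + 2 * r * B + r ^+ 2 * (u1 ^+ 2 + u2 ^+ 2)).
    by rewrite /B; ring.
  by rewrite hu mulr1 eN.
rewrite F0 F1 F2 F3.
case=> hh; [apply: Or41 | apply: Or42 | apply: Or43 | apply: Or44]; lra.
Qed.

End Cover.

Section Count.
Variable R : realType.
Variable T : choiceType.
Implicit Types A B C D : set T.

Lemma ecardE A : ecard A = (\esum_(i in [set: T]) (if i \in A then 1 else 0))%E :> \bar R.
Proof. by rewrite /ecard esum_mkcond. Qed.

Lemma ecard_ge0 A : (0 <= ecard A :> \bar R)%E.
Proof. by apply: esum_ge0 => x _; rewrite lee01. Qed.

Lemma ecard_subset A B : A `<=` B -> (ecard A <= ecard B :> \bar R)%E.
Proof.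
move=> AB; rewrite !ecardE; apply: le_esum => i _.
case: ifPn => iA; last by case: ifP => _; rewrite ?lee01.
by rewrite ifT // inE; apply: AB; move: iA; rewrite inE.
Qed.

Lemma ecard_image (T' : choiceType) A (f : T -> T') : set_inj A f ->
  ecard (f @` A) = ecard A :> \bar R.
Proof. by move=> inj; rewrite /ecard (esum_image _ _ (fun _ => 1%E)). Qed.

Lemma ecard_U4 A B C D :
  (ecard (A `|` B `|` C `|` D) <= ecard A + ecard B + ecard C + ecard D :> \bar R)%E.
Proof.
rewrite !ecardE -!esumD; last first.
all: try (by move=> i _; case: ifP; rewrite ?lee01).
all: try (by move=> i _; rewrite ?adde_ge0 //; case: ifP; rewrite ?lee01).
apply: le_esum => i _.
have h : forall (X : set T), (0 <= (if i \in X then 1 else 0 : \bar R))%E.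
  by move=> X; case: ifP; rewrite ?lee01.
case: ifPn => hi; last by rewrite !adde_ge0.
move: hi; rewrite !in_setU => /orP[/orP[/orP[]|]|] h1; rewrite h1.
- by apply: lee_paddr (h _) _; apply: lee_paddr (h _) _; apply: lee_paddr (h _) _.
- by apply: lee_paddr (h _) _; apply: lee_paddr (h _) _; apply: lee_paddl (h _) _.
- by apply: lee_paddr (h _) _; apply: lee_paddl (adde_ge0 (h _) (h _)) _.
- by apply: lee_paddl (adde_ge0 (adde_ge0 (h _) (h _)) (h _)) _.
Qed.

End Count.

Section Main.
Variable R : realType.
Implicit Types (S : set (complex R)) (Rs : complex R -> set (complex R)).

Definition Pset S (Delta : R) (c : complex R) :=
  [set p : complex R * complex R | is_gauss p.1 /\ S p.2 /\
     gcoprime p.1 p.2 /\ normc (p.1 / p.2 - c) <= Num.sqrt Delta].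

Lemma PfunE S Delta c : Defs.Pfun S Delta c = ecard (Pset S Delta c).
Proof. by []. Qed.

Lemma four_mul (x : \bar R) : (0 <= x)%E -> (x + x + x + x = 4%:E * x)%E.
Proof.
case: x => [s||] //= _.
  by rewrite -!EFinD; congr EFin; ring.
by rewrite gt0_muley ?lte_fin // !addye.
Qed.

Lemma conj_expr (a q al w : complex R) :
  conjc (conjc a / conjc q - al - w) = a / q - conjc al - conjc w.
Proof. by rewrite !rmorphB fmorph_div /= !conjcK. Qed.

Lemma K_le_P S Rs Delta al :
  (forall q, S q -> is_gauss q /\ q != 0) ->
  (forall q, S q -> reduced_residue_system q (Rs q)) ->
  (Kcount S Rs Delta al <= Defs.Pfun S Delta (conjc al))%E.
Proof.
move=> hS hRs.
set Ks := [set p : complex R * complex R | S p.2 /\ Rs p.2 p.1 /\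
     exists w, is_gauss w /\
       normc (conjc p.1 / conjc p.2 - al - w) <= Num.sqrt Delta].
have -> : Kcount S Rs Delta al = ecard Ks by [].
pose W (p : complex R * complex R) := xget 0 [set w | is_gauss w /\
       normc (conjc p.1 / conjc p.2 - al - w) <= Num.sqrt Delta].
have hW : forall p, Ks p -> is_gauss (W p) /\
       normc (conjc p.1 / conjc p.2 - al - W p) <= Num.sqrt Delta.
  by move=> p [_ [_ ex]]; apply: (xgetPex 0 ex).
pose f (p : complex R * complex R) := (p.1 - conjc (W p) * p.2, p.2).
have inj : set_inj Ks f.
  move=> [a1 q1] [a2 q2] /set_mem K1 /set_mem K2 [e1 e2]; rewrite /= in e1 e2; subst q2.
  have [gw1 _] := hW _ K1; have [gw2 _] := hW _ K2.
  move: K1 K2 e1 => [Sq [R1 _]] [_ [R2 _]] /= e1.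
  have [hR1 hR2] := hRs q1 Sq.
  have [g1 c1] := hR1 a1 R1; have [g2 c2] := hR1 a2 R2.
  have [a0 [[Ra0 da0] uniq]] := hR2 a1 g1 c1.
  have u1 : a0 = a1.
    apply: uniq; split => //; exists 0; split; first exact: gauss0.
    by rewrite subrr mulr0.
  have u2 : a0 = a2.
    apply: uniq; split => //.
    exists (conjc (W (a1, q1)) - conjc (W (a2, q1))); split.
      by apply: gaussB; apply: gaussJ.
    move: e1; move: (W (a1, q1)) (W (a2, q1)) => x y e1.
    have -> : a1 = a2 - conjc y * q1 + conjc x * q1 by rewrite -e1; ring.
    ring.
  by rewrite -u1 u2.
rewrite PfunE -(ecard_image R inj); apply: ecard_subset.
move=> _ [[a q] Kp <-]; have [gw hw] := hW _ Kp.
move: Kp => [Sq [Ra _]] /=; have [hR1 _] := hRs q Sq.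
have [ga ca] := hR1 a Ra.
split; first by apply: gaussB => //; apply: gaussM; [apply: gaussJ|exact: (hS q Sq).1 ].
split => //; split; first exact: gcoprime_sub (gaussJ gw) ca.
have hw' : normc (a / q - conjc al - conjc (W (a, q))) <= Num.sqrt Delta.
  have e := normcJ (conjc a / conjc q - al - W (a, q)).
  rewrite conj_expr in e; apply: (le_trans _ hw).
  by rewrite le_eqVlt; apply/orP; left; apply/eqP; exact: e.
have q0 := (hS q Sq).2.
suff -> : (a - conjc (W (a, q)) * q) / q - conjc al = a / q - conjc al - conjc (W (a, q)).
  exact: hw'.
by field.
Qed.


Lemma tau_sq (Delta : R) : 0 < Delta ->
  0 < Delta `^ (- (1 / 4)) /\ (Delta `^ (- (1 / 4))) ^+ 2 = (Num.sqrt Delta)^-1.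
Proof.
move=> D0; split; first by apply: powR_gt0.
rewrite -(powR_mulrn 2 (powR_ge0 _ _)) -powRrM.
rewrite (_ : - (1 / 4) * 2%:R = - 2^-1 :> R); last by field.
by rewrite powRN powR12_sqrt // ltW.
Qed.

Lemma RHS_ub S Delta r b z : rhs_index Delta r b z ->
  (Defs.Pfun S Delta (b / r + z)%R <= RHSsup S Delta)%E.
Proof. by move=> h; apply: ereal_sup_ubound; exists r, b, z; split. Qed.

Lemma P_bound S Delta g : 0 < Delta <= 1 / 2 ->
  (Defs.Pfun S Delta g <= 4%:E * RHSsup S Delta)%E.
Proof.
move=> /andP[D0 D1].
set rho := Num.sqrt Delta.
have rho0 : 0 < rho by rewrite sqrtr_gt0.
have rho1 : rho <= 1.
  have : Num.sqrt Delta <= Num.sqrt 1 by rewrite ler_sqrt ?ler01 //; lra.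
  by rewrite sqrtr1.
have [tau0 etau] := tau_sq D0.
set tau := Delta `^ (- (1 / 4)) in tau0 etau.
have t1 : 1 <= tau ^+ 2 by rewrite etau invr_ge1 // unitfE gt_eqF.
have [r0 [b0 [gr0 gb0 r00 hr0 hb0]]] := dirichlet g t1.
have [b [r [gb gr r_0 cop [ebr nsr]]]] := reduce_frac gb0 gr0 r00.
have nr1 : 1 <= normc r.
  by rewrite normc_ge ?ler01 // expr1n; apply: gauss_ns_ge1.
have nrt : normc r <= tau.
  by rewrite normc_le; [exact: le_trans nsr hr0 | exact: ltW].
have nr0 : 0 < normc r by exact: (lt_le_trans ltr01 nr1).
set d := g - b / r.
have hd : normc d <= 2 / (normc r * tau).
  rewrite normc_le; last by rewrite divr_ge0 // mulr_ge0 // ?ltW.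
  have e1 : d * r0 = r0 * g - b0 by rewrite /d ebr; field.
  have e2 : ns d * ns r0 = ns (r0 * g - b0) by rewrite -nsM e1.
  have h4 : ns d * ns r * tau ^+ 2 <= 4.
    apply: le_trans hb0; rewrite -e2.
    rewrite ler_pM2r ?exprn_gt0 //.
    have := ns_ge0 d; move: nsr; nra.
  rewrite expr_div_n exprMn normc_sq ler_pdivlMr; first by lra.
  rewrite mulr_gt0 // ?exprn_gt0 //.
  by apply: lt_le_trans ltr01 _; apply: gauss_ns_ge1.
have rhole : rho <= 2 / (normc r * tau).
  rewrite ler_pdivlMr; last by rewrite mulr_gt0.
  have : rho * tau ^+ 2 = 1 by rewrite etau divff // gt_eqF.
  have : normc r * tau <= tau ^+ 2 by rewrite expr2 ler_pM2r.
  nra.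
have adm : forall z, rho <= normc z -> normc z <= 2 / (normc r * tau) ->
    rhs_index Delta r b z.
  move=> z h1 h2; rewrite /rhs_index; split => //.
    by rewrite nr1 nrt.
  by rewrite h1 h2.
have [hA|hB] := lerP rho (normc d).
  have -> : Defs.Pfun S Delta g = Defs.Pfun S Delta (b / r + d).
    by rewrite /d addrC subrK.
  have h := RHS_ub S (adm d hA hd).
  have h0 := le_trans (ecard_ge0 _ _) h.
  rewrite -four_mul //; apply: le_trans h _.
  by rewrite -!addeA; apply: leeDl; rewrite !adde_ge0.
have [z0 [z1 [z2 [z3 [n0 n1 n2 n3 hc]]]]] := cover (b / r) rho0 hB.
have le1 : forall z, normc z = rho -> rho <= normc z by move=> z ->.
have le2 : forall z, normc z = rho -> normc z <= 2 / (normc r * tau) by move=> z ->.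
have a0 := RHS_ub S (adm z0 (le1 _ n0) (le2 _ n0)).
have a1 := RHS_ub S (adm z1 (le1 _ n1) (le2 _ n1)).
have a2 := RHS_ub S (adm z2 (le1 _ n2) (le2 _ n2)).
have a3 := RHS_ub S (adm z3 (le1 _ n3) (le2 _ n3)).
have h0 := le_trans (ecard_ge0 _ _) a0.
have sub : Pset S Delta g `<=` Pset S Delta (b / r + z0) `|` Pset S Delta (b / r + z1)
   `|` Pset S Delta (b / r + z2) `|` Pset S Delta (b / r + z3).
  move=> p [gp [Sp [cp hp]]].
  have eg : b / r + d = g by rewrite /d addrC subrK.
  have hp' : normc (p.1 / p.2 - (b / r + d)) <= rho by rewrite eg.
  by case: (hc _ hp') => h; [left; left; left | left; left; right | left; right | right].
rewrite PfunE; apply: le_trans (ecard_subset R sub) _.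
apply: le_trans (ecard_U4 R _ _ _ _) _.
rewrite -four_mul //.
exact: leeD (leeD (leeD a0 a1) a2) a3.
Qed.

Theorem lemma1' (Q : nat) (S : set (complex R))
  (Rs : complex R -> set (complex R)) (Delta : R) :
  (forall q, S q -> [/\ normc q <= Num.sqrt (Q%:R), is_gauss q & q != 0]) ->
  0 < Delta <= 1 / 2 ->
  (forall q, S q -> reduced_residue_system q (Rs q)) ->
  (Kfun S Rs Delta <= 4%:E * RHSsup S Delta)%E.
Proof.
move=> hS hD hRs.
apply: ge_ereal_sup => _ [al _ <-].
apply: le_trans (K_le_P _ _ _ _) (P_bound _ _ hD).
  by move=> q Sq; have [_ ? ?] := hS q Sq.
exact: hRs.
Qed.

End Main.

Theorem lemma1 (R : realType) (Q : nat) (S : set (complex R))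
  (Rs : complex R -> set (complex R)) (Delta : R) :
  (forall q, S q -> [/\ normc q <= Num.sqrt (Q%:R), is_gauss q & q != 0]) ->
  0 < Delta <= 1 / 2 ->
  (forall q, S q -> reduced_residue_system q (Rs q)) ->
  (Kfun S Rs Delta <= 4%:E * RHSsup S Delta)%E.
Proof. exact: lemma1'. Qed.
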